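(* Let $m,n\in\mathbb{N}$, let $\Gamma:\ell^2(\mathbb{R}^n)\to\ell^1(\mathbb{R}^m)$ be linear and bounded, and let $J(u)=\|\Gamma u\|_{\ell^1(\mathbb{R}^m)}$ for $u\in\ell^2(\mathbb{R}^n)$. Let $u_\alpha\in\ell^2(\mathbb{R}^n)$, let $q_\alpha\in\partial\|\cdot\|_{\ell^1(\mathbb{R}^m)}(\Gamma u_\alpha)$ and $p_\alpha=\Gamma^*q_\alpha$. Then for every $u\in\ell^2(\mathbb{R}^n)$, $$\mathrm{ICB}^{q_\alpha}_{\ell^1(\mathbb{R}^m)}(\Gamma u,\Gamma u_\alpha)\le \mathrm{ICB}^{p_\alpha}_J(u,u_\alpha).$$
   Context: $\ell^p(\mathbb{R}^d)$ is the space of sequences $(x_i)_{i\in\mathbb{N}}$, $x_i\in\mathbb{R}^d$, with $\sum_i|x_i|^p<\infty$ ($|\cdot|$ Euclidean norm), and $\|x\|_{\ell^1(\mathbb{R}^m)}=\sum_i|x_i|$. For a convex functional $F$ with $q\in\partial F(w)$, the Bregman distance is $D_F^q(x,w)=F(x)-F(w)-\langle q,x-w\rangle$, and $\mathrm{ICB}^q_F(x,w)=\inf_{z}\big(D_F^q(x-z,w)+D_F^{-q}(z,-w)\big)$, the infimum being over $z$ in the domain space of $F$ (here $\ell^2(\mathbb{R}^n)$ for $F=J$ and $\ell^1(\mathbb{R}^m)$ for $F=\|\cdot\|_{\ell^1(\mathbb{R}^m)}$). *)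

(* Defs.v *)
From HB Require Import structures.
From mathcomp Require Import all_boot all_order all_algebra.
From mathcomp Require Import all_classical all_reals all_analysis.
Set Implicit Arguments. Unset Strict Implicit. Unset Printing Implicit Defensive.
Import Order.TTheory GRing.Theory Num.Theory.
Import numFieldNormedType.Exports.
Local Open Scope ring_scope.
Local Open Scope classical_set_scope.

Section Defs.
Variable R : realType.

Definition seqv (d : nat) := nat -> 'rV[R]_d.

Definition eucl (d : nat) (v : 'rV[R]_d) : R := Num.sqrt (\sum_(j < d) v ord0 j ^+ 2).

Definition in_l1 d (x : seqv d) : Prop := cvgn (series (fun i => eucl (x i))).
Definition in_l2 d (x : seqv d) : Prop := cvgn (series (fun i => eucl (x i) ^+ 2)).
Definition l1norm d (x : seqv d) : R := limn (series (fun i => eucl (x i))).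
Definition l2norm d (x : seqv d) : R := Num.sqrt (limn (series (fun i => eucl (x i) ^+ 2))).

Definition sadd d (x y : seqv d) : seqv d := fun i => x i + y i.
Definition sopp d (x : seqv d) : seqv d := fun i => - x i.
Definition ssub d (x y : seqv d) : seqv d := fun i => x i - y i.
Definition sscale d (a : R) (x : seqv d) : seqv d := fun i => a *: x i.

Definition bounded_linear d e (dom : seqv d -> Prop) (N1 : seqv d -> R)
  (cod : seqv e -> Prop) (N2 : seqv e -> R) (G : seqv d -> seqv e) : Prop :=
  (forall u, dom u -> cod (G u)) /\
  (forall a u v, dom u -> dom v -> G (sadd (sscale a u) v) = sadd (sscale a (G u)) (G v)) /\
  (exists C : R, forall u, dom u -> N2 (G u) <= C * N1 u).

Definition dual_elt d (dom : seqv d -> Prop) (N : seqv d -> R) (q : seqv d -> R) : Prop :=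
  (forall a u v, dom u -> dom v -> q (sadd (sscale a u) v) = a * q u + q v) /\
  (exists C : R, forall u, dom u -> `|q u| <= C * N u).

Definition subdiff d (dom : seqv d -> Prop) (N : seqv d -> R) (F : seqv d -> R)
  (w : seqv d) (q : seqv d -> R) : Prop :=
  dual_elt dom N q /\ forall x, dom x -> F w + q (ssub x w) <= F x.

Definition bregman d (F : seqv d -> R) (q : seqv d -> R) (x w : seqv d) : R :=
  F x - F w - q (ssub x w).

Definition ICB d (dom : seqv d -> Prop) (F : seqv d -> R) (q : seqv d -> R) (x w : seqv d) : R :=
  inf [set bregman F q (ssub x z) w + bregman F (fun y => - q y) z (sopp w) | z in dom].

(* adjoint: <Gamma^* q, u> = <q, Gamma u> *)
Definition adjoint d e (G : seqv d -> seqv e) (q : seqv e -> R) : seqv d -> R :=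
  fun u => q (G u).

End Defs.

(* Main.v *)
Require Import Defs.
From HB Require Import structures.
From mathcomp Require Import all_boot all_order all_algebra.
From mathcomp Require Import all_classical all_reals all_analysis.
From mathcomp Require Import lra.
Import Order.TTheory GRing.Theory Num.Theory.
Local Open Scope ring_scope.

Section H.
Variable R : realType.

Lemma eucl_sq d (v : 'rV[R]_d) : eucl v ^+ 2 = \sum_(j < d) v ord0 j ^+ 2.
Proof. by rewrite /eucl sqr_sqrtr // sumr_ge0 // => j _; rewrite sqr_ge0. Qed.

Lemma eucl_ge0 d (v : 'rV[R]_d) : 0 <= eucl v.
Proof. exact: sqrtr_ge0. Qed.

Lemma coord_le d (v : 'rV[R]_d) j : `|v ord0 j| <= eucl v.
Proof.
rewrite -sqrtr_sqr /eucl ler_wsqrtr // (bigD1 j) //= lerDl sumr_ge0 // => k _.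
by rewrite sqr_ge0.
Qed.

Lemma eucl_le_sum d (v : 'rV[R]_d) : eucl v <= \sum_(j < d) `|v ord0 j|.
Proof.
have S0 : 0 <= \sum_(j < d) `|v ord0 j| by rewrite sumr_ge0.
rewrite -(ger0_norm S0) -sqrtr_sqr /eucl ler_wsqrtr // expr2 mulr_suml.
apply: ler_sum => j _.
rewrite -[X in X <= _]real_normK ?num_real // expr2 ler_wpM2l //.
by rewrite (bigD1 j) //= lerDl sumr_ge0.
Qed.

Lemma eucl_comb d a (x y : 'rV[R]_d) :
  eucl (a *: x + y) <= d%:R * (`|a| * eucl x + eucl y).
Proof.
apply: le_trans; first exact: eucl_le_sum.
rewrite mulr_natl -[X in _ *+ X]card_ord -sumr_const.
apply: ler_sum => j _; rewrite !mxE.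
apply: le_trans (ler_normD _ _) _; rewrite normrM.
apply: lerD; last exact: coord_le.
by rewrite ler_wpM2l // coord_le.
Qed.

Lemma eucl_comb2 d a (x y : 'rV[R]_d) :
  eucl (a *: x + y) ^+ 2 <= 2 * a ^+ 2 * eucl x ^+ 2 + 2 * eucl y ^+ 2.
Proof.
rewrite !eucl_sq !mulr_sumr -big_split /=; apply: ler_sum => j _; rewrite !mxE.
have := sqr_ge0 (a * x ord0 j - y ord0 j); nra.
Qed.

Lemma l1_comb d a (x y : seqv R d) : in_l1 x -> in_l1 y -> in_l1 (sadd (sscale a x) y).
Proof.
move=> hx hy; apply: (@series_le_cvg R _
   ((d%:R * `|a|) *: (fun i => eucl (x i)) + d%:R *: (fun i => eucl (y i)))).
- by move=> i; exact: eucl_ge0.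
- by move=> i; rewrite /= addr_ge0 // mulr_ge0 // ?mulr_ge0 // eucl_ge0.
- move=> i; rewrite /= /sadd /sscale !fctE.
  apply: le_trans; first exact: eucl_comb.
  by rewrite mulrDr mulrA.
- by apply: (@is_cvg_seriesD R); apply: is_cvg_seriesZ.
Qed.

Lemma l2_comb d a (x y : seqv R d) : in_l2 x -> in_l2 y -> in_l2 (sadd (sscale a x) y).
Proof.
move=> hx hy; apply: (@series_le_cvg R _
   ((2 * a ^+ 2) *: (fun i => eucl (x i) ^+ 2) + 2 *: (fun i => eucl (y i) ^+ 2))).
- by move=> i; exact: sqr_ge0.
- move=> i; rewrite /= !fctE.
  by apply: addr_ge0; apply: mulr_ge0; rewrite ?sqr_ge0 // mulr_ge0 // sqr_ge0.
- move=> i; rewrite /= /sadd /sscale !fctE; exact: eucl_comb2.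
- by apply: (@is_cvg_seriesD R); apply: is_cvg_seriesZ.
Qed.

Lemma ssubE d (x y : seqv R d) : ssub x y = sadd (sscale (-1) y) x.
Proof. by apply: funext => i; rewrite /ssub/sadd/sscale scaleN1r addrC. Qed.

Lemma soppE d (x : seqv R d) : sopp x = sadd (sscale (-2) x) x.
Proof.
apply: funext => i; rewrite /sopp/sadd/sscale; apply/matrixP => r c; rewrite !mxE.
lra.
Qed.

Lemma l1norm_opp d (x : seqv R d) : l1norm (sopp x) = l1norm x.
Proof.
rewrite /l1norm; congr (limn (series _)); apply: funext => i.
by rewrite /eucl /sopp; congr Num.sqrt; apply: eq_bigr => j _; rewrite mxE sqrrN.
Qed.
End H.

Local Open Scope classical_set_scope.
Theorem theorem5 (R : realType) (m n : nat)
  (Gamma : seqv R n -> seqv R m)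
  (HG : bounded_linear (@in_l2 R n) (@l2norm R n) (@in_l1 R m) (@l1norm R m) Gamma)
  (ua : seqv R n) (Hua : in_l2 ua)
  (qa : seqv R m -> R)
  (Hqa : subdiff (@in_l1 R m) (@l1norm R m) (@l1norm R m) (Gamma ua) qa) :
  let J := fun u : seqv R n => l1norm (Gamma u) in
  let pa := adjoint Gamma qa in
  forall u : seqv R n, in_l2 u ->
    ICB (@in_l1 R m) (@l1norm R m) qa (Gamma u) (Gamma ua)
      <= ICB (@in_l2 R n) J pa u ua.
Proof.
move=> J pa u Hu.
case: HG => Gdom [Glin _].
case: Hqa => [[qlin _] qsub].
have l1sub (x y : seqv R m) : in_l1 x -> in_l1 y -> in_l1 (ssub x y).
  by move=> hx hy; rewrite ssubE; apply: l1_comb.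
have l1opp (x : seqv R m) : in_l1 x -> in_l1 (sopp x).
  by move=> hx; rewrite soppE; apply: l1_comb.
have l2sub (x y : seqv R n) : in_l2 x -> in_l2 y -> in_l2 (ssub x y).
  by move=> hx hy; rewrite ssubE; apply: l2_comb.
have l2opp (x : seqv R n) : in_l2 x -> in_l2 (sopp x).
  by move=> hx; rewrite soppE; apply: l2_comb.
have Gsub (x y : seqv R n) : in_l2 x -> in_l2 y -> Gamma (ssub x y) = ssub (Gamma x) (Gamma y).
  by move=> hx hy; rewrite !ssubE Glin.
have Gopp (x : seqv R n) : in_l2 x -> Gamma (sopp x) = sopp (Gamma x).
  by move=> hx; rewrite !soppE Glin.
have qopp (y : seqv R m) : in_l1 y -> qa (sopp y) = - qa y.
  by move=> hy; rewrite soppE qlin //; lra.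
have f0 (z : seqv R m) : in_l1 z -> 0 <=
    bregman (@l1norm R m) qa (ssub (Gamma u) z) (Gamma ua) +
    bregman (@l1norm R m) (fun y => - qa y) z (sopp (Gamma ua)).
  move=> hz; rewrite /bregman.
  have h1 := qsub _ (l1sub _ _ (Gdom _ Hu) hz).
  have h2 := qsub _ (l1opp _ hz).
  rewrite l1norm_opp in h2 *.
  have e : ssub (sopp z) (Gamma ua) = sopp (ssub z (sopp (Gamma ua))).
    apply: funext => i; rewrite /ssub /sopp; apply/matrixP => r c; rewrite !mxE.
    lra.
  rewrite e qopp in h2; first by rewrite l1norm_opp; lra.
  by apply: l1sub => //; apply: l1opp; apply: Gdom.
rewrite /ICB.
have hA : has_lbound [set bregman (@l1norm R m) qa (ssub (Gamma u) z) (Gamma ua) +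
    bregman (@l1norm R m) (fun y => - qa y) z (sopp (Gamma ua)) | z in @in_l1 R m].
  by exists 0 => _ [z hz <-]; exact: f0.
apply: lb_le_inf.
  by eexists; exists u.
move=> _ [z hz <-].
apply: le_trans; first by apply: (ge_inf hA); exists (Gamma z); first exact: Gdom.
rewrite /J /pa /adjoint /bregman /=.
rewrite (Gsub u z) // (Gopp ua) // (Gsub z (sopp ua)) //; last exact: l2opp.
rewrite (Gsub (ssub u z) ua) //; last exact: l2sub.
by rewrite (Gsub u z) // Gopp.
Qed.
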